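(* Let $T$ be a word in the letters $a,b$ of Type I or of Type II. Then $\mathcal{Z}(T)>\tfrac13$ if and only if $\mathcal{Z}(\overline{U}(T))>\tfrac13$, and $\mathcal{Z}(T)>\tfrac13$ if and only if $\mathcal{Z}(\overline{V}(T))>\tfrac13$.
   Context: A chain is a finite sequence $T=[a_1\dots a_n]$ of positive integers; for such $T$ define $\mathcal{Z}(T)=\big(\max_{1\le i\le n}([a_i;a_{i+1},\dots,a_n]+[0;a_{i-1},\dots,a_1])\big)^{-1}$ (finite continued fractions; for $i=1$ the second summand is $0$). Write $a=[22]$ and $b=[11]$; a finite word in the letters $a,b$ is identified with the chain obtained by concatenation. A word is of Type I if it equals $b^{e_1}ab^{e_2}a\cdots ab^{e_n}$ and of Type II if it equals $ba^{e_1}ba^{e_2}b\cdots ba^{e_n}b$, for some $n\ge1$ and integers $e_i\ge1$. The Nielsen moves are the substitutions $U:a\mapsto ab,\ b\mapsto b$ and $V:a\mapsto a,\ b\mapsto ab$ applied letterwise to finite words. For a word $T$ define $\overline{U}(T)=b\,U(T)$ and, when $T$ begins with $b$ (so $V(T)$ begins with $a$), $\overline{V}(T)=a^{-1}V(T)$, the word $V(T)$ with its first letter $a$ deleted. *)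

(* Defs.v *)
From mathcomp Require Import all_boot all_order all_algebra.
Set Implicit Arguments. Unset Strict Implicit. Unset Printing Implicit Defensive.
Import Order.TTheory GRing.Theory Num.Theory.
Local Open Scope ring_scope.

Definition chain := seq nat.

(* cf [:: x1; ...; xk] = [x1; x2, ..., xk]  (finite continued fraction);
   cf0 s = [0; s] = 1 / cf s, and cf0 [::] = 0. *)
Fixpoint cf (s : chain) : rat :=
  match s with
  | [::] => 0
  | x :: s' => x%:R + (if s' is [::] then 0 else (cf s')^-1)
  end.
Definition cf0 (s : chain) : rat := if s is [::] then 0 else (cf s)^-1.

(* For 0 <= i < size T (i.e. index i+1 in the paper):
   [a_{i+1}; a_{i+2}, ..., a_n] + [0; a_i, ..., a_1]. *)
Definition zterm (T : chain) (i : nat) : rat :=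
  cf (drop i T) + cf0 (rev (take i T)).

Definition zmax (T : chain) : rat :=
  foldr Num.max 0 [seq zterm T i | i <- iota 0 (size T)].

Definition Zc (T : chain) : rat := (zmax T)^-1.

Inductive letter := La | Lb.
Definition word := seq letter.

Definition chain_of_letter (l : letter) : chain :=
  match l with La => [:: 2%N; 2%N] | Lb => [:: 1%N; 1%N] end.
Definition chain_of (w : word) : chain := flatten (map chain_of_letter w).

Definition typeI (w : word) : Prop :=
  exists (e1 : nat) (es : seq nat),
    (0 < e1)%N /\ all (fun e => 0 < e)%N es /\
    w = nseq e1 Lb ++ flatten [seq La :: nseq e Lb | e <- es].

Definition typeII (w : word) : Prop :=
  exists es : seq nat,
    es <> [::] /\ all (fun e => 0 < e)%N es /\
    w = flatten [seq Lb :: nseq e La | e <- es] ++ [:: Lb].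

Definition U (w : word) : word :=
  flatten [seq (match l with La => [:: La; Lb] | Lb => [:: Lb] end) | l <- w].
Definition V (w : word) : word :=
  flatten [seq (match l with La => [:: La] | Lb => [:: La; Lb] end) | l <- w].

Definition Ubar (w : word) : word := Lb :: U w.
(* Only used when w begins with b, so that V w begins with a: delete it. *)
Definition Vbar (w : word) : word := behead (V w).

(* Main.v *)
Require Import Defs.
From mathcomp Require Import all_boot all_order all_algebra.
From mathcomp Require Import ring lra zify.
Import Order.TTheory GRing.Theory Num.Theory.
Local Open Scope ring_scope.

Lemma cfE x s : cf (x :: s) = x%:R + cf0 s.
Proof. by case: s. Qed.
Lemma cf0E s : cf0 s = (cf s)^-1.
Proof. by case: s => [|x s] //=; rewrite invr0. Qed.

Lemma chain_cat s t : chain_of (s ++ t) = chain_of s ++ chain_of t.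
Proof. by rewrite /chain_of map_cat flatten_cat. Qed.
Lemma chain_cons x s : chain_of (x :: s) = chain_of_letter x ++ chain_of s.
Proof. by []. Qed.

Definition kof (z : letter) : nat := match z with La => 2 | Lb => 1 end.
Lemma chain_letter z : chain_of_letter z = [:: kof z; kof z].
Proof. by case: z. Qed.

Lemma chain_rev s : rev (chain_of s) = chain_of (rev s).
Proof.
elim: s => [|x s IH] //.
rewrite chain_cons rev_cat IH rev_cons -cats1 chain_cat chain_letter /=.
by rewrite /chain_of /= cats0 chain_letter.
Qed.

Lemma size_chain s : size (chain_of s) = (2 * size s)%N.
Proof. elim: s => [|x s IH] //; by rewrite chain_cons size_cat IH chain_letter /= mulnS. Qed.

Definition f (W : word) : rat := cf0 (chain_of W).
Definition g (k : nat) (t : rat) : rat := (k%:R + (k%:R + t)^-1)^-1.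

Lemma fcons z W : f (z :: W) = g (kof z) (f W).
Proof.
by rewrite /f /g chain_cons chain_letter /=; case: (chain_of W).
Qed.

Lemma kof_gt0 z : (0 < kof z)%N. Proof. by case: z. Qed.

Lemma g_gt0 k t : (0 < k)%N -> 0 <= t -> 0 < g k t.
Proof.
move=> hk ht; rewrite /g invr_gt0.
have h1 : 0 < k%:R :> rat by rewrite ltr0n.
have h2 : 0 < (k%:R + t)^-1 by rewrite invr_gt0; lra.
lra.
Qed.

Lemma g_lt1 k t : (0 < k)%N -> 0 <= t -> g k t < 1.
Proof.
move=> hk ht; rewrite /g.
have h1 : 1 <= k%:R :> rat by rewrite ler1n.
have h2 : 0 < (k%:R + t)^-1 by rewrite invr_gt0; lra.
rewrite invf_lt1; lra.
Qed.

Lemma f_ge0 W : 0 <= f W.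
Proof. case: W => [|z W]; first by rewrite /f /= lexx.
rewrite fcons; apply/ltW/g_gt0; first exact: kof_gt0.
elim: W => [|y W IH]; first by rewrite /f /= lexx.
rewrite fcons; apply/ltW/g_gt0 => //; exact: kof_gt0. Qed.

Lemma f_lt1 W : f W < 1.
Proof. case: W => [|z W]; first by rewrite /f /= ltr01.
rewrite fcons; apply: g_lt1; [exact: kof_gt0| exact: f_ge0]. Qed.

Lemma g_lt k s t : (0 < k)%N -> 0 <= s -> s < t -> g k s < g k t.
Proof.
move=> hk hs hst; rewrite /g.
have h1 : 0 < k%:R :> rat by rewrite ltr0n.
have a1 : (k%:R + t)^-1 < (k%:R + s)^-1.
  by rewrite ltf_pV2 ?posrE; lra.
have a2 : 0 < (k%:R + t)^-1 by rewrite invr_gt0; lra.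
rewrite ltf_pV2 ?posrE; lra.
Qed.

Lemma g_le k s t : (0 < k)%N -> 0 <= s -> s <= t -> g k s <= g k t.
Proof.
move=> hk hs; rewrite le_eqVlt => /orP [/eqP -> //|hst].
by apply/ltW/g_lt.
Qed.

Lemma g21 s t : 0 <= s -> 0 <= t -> g 2 s < g 1 t.
Proof.
move=> hs ht; rewrite /g.
have a1 : 0 < (2%:R + s)^-1 :> rat by rewrite invr_gt0; lra.
have a2 : (1%:R + t)^-1 <= 1 :> rat by rewrite invf_le1; lra.
have a3 : 0 < (1%:R + t)^-1 :> rat by rewrite invr_gt0; lra.
rewrite ltf_pV2 ?posrE; lra.
Qed.

Fixpoint ltw (s t : word) : bool :=
  match s, t with
  | [::], [::] => false
  | [::], _ :: _ => true
  | _ :: _, [::] => false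
  | x :: s', y :: t' =>
    match x, y with
    | La, La => ltw s' t'
    | Lb, Lb => ltw s' t'
    | La, Lb => true
    | Lb, La => false
    end
  end.

Lemma ltw_f s t : (ltw s t -> f s < f t) /\ (~~ ltw s t -> f t <= f s).
Proof.
elim: s t => [|x s IH] [|y t] /=.
- by split => //; rewrite lexx.
- split => // _; rewrite fcons; apply: g_gt0; [exact: kof_gt0|exact: f_ge0].
- by split => // _; apply: f_ge0.
- have [IH1 IH2] := IH t.
  case: x; case: y; rewrite !fcons /=.
  + split=> h; [apply: g_lt => //; [exact: f_ge0|exact: IH1]
              | apply: g_le => //; [exact: f_ge0|exact: IH2]].
  + by split => // _; apply: g21; apply: f_ge0.
  + by split => // _; apply/ltW/g21; apply: f_ge0.
  + split=> h; [apply: g_lt => //; [exact: f_ge0|exact: IH1]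
              | apply: g_le => //; [exact: f_ge0|exact: IH2]].
Qed.

Lemma ltwE s t : (f s < f t) = ltw s t.
Proof.
have [h1 h2] := ltw_f s t.
apply/idP/idP; last exact: h1.
move=> h; apply/negPn/negP => /h2; by rewrite leNgt h.
Qed.

Lemma chain_split X z Y :
  chain_of (X ++ z :: Y) = chain_of X ++ kof z :: kof z :: chain_of Y.
Proof. by rewrite chain_cat chain_cons chain_letter. Qed.

Lemma zterm0 X z Y :
  zterm (chain_of (X ++ z :: Y)) (size (chain_of X)) =
  ((kof z)%:R + ((kof z)%:R + f Y)^-1) + f (rev X).
Proof.
rewrite /zterm chain_split drop_size_cat // take_size_cat // chain_rev.
by rewrite cfE [cf0 (_ :: _)]cf0E cfE.
Qed.

Lemma zterm1 X z Y :
  zterm (chain_of (X ++ z :: Y)) (size (chain_of X)).+1 =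
  ((kof z)%:R + f Y) + ((kof z)%:R + f (rev X))^-1.
Proof.
rewrite /zterm chain_split -cat_rcons drop_size_cat ?size_rcons //.
rewrite take_size_cat ?size_rcons // rev_rcons chain_rev.
by rewrite cfE [cf0 (_ :: _)]cf0E cfE.
Qed.

Lemma fb W : f (Lb :: W) = 1 - (2%:R + f W)^-1.
Proof.
rewrite fcons /g /=. have := f_ge0 W => h.
field; apply/andP; split; rewrite gt_eqF //; lra.
Qed.

Lemma foo : True. Proof. by []. Qed.

Lemma zb0 X Y : zterm (chain_of (X ++ Lb :: Y)) (size (chain_of X)) < 3%:R.
Proof.
rewrite zterm0 /=. have h1 := f_ge0 Y; have h2 := f_lt1 (rev X).
have : (1%:R + f Y)^-1 <= 1 :> rat by rewrite invf_le1; lra.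
lra.
Qed.

Lemma zb1 X Y : zterm (chain_of (X ++ Lb :: Y)) (size (chain_of X)).+1 < 3%:R.
Proof.
rewrite zterm1 /=. have h1 := f_ge0 (rev X); have h2 := f_lt1 Y.
have : (1%:R + f (rev X))^-1 <= 1 :> rat by rewrite invf_le1; lra.
lra.
Qed.

Lemma za0 X Y : (zterm (chain_of (X ++ La :: Y)) (size (chain_of X)) < 3%:R)
  = ltw (rev X) (Lb :: Y).
Proof.
rewrite zterm0 -ltwE fb /=.
apply/idP/idP => h; lra.
Qed.

Lemma za1 X Y : (zterm (chain_of (X ++ La :: Y)) (size (chain_of X)).+1 < 3%:R)
  = ltw Y (Lb :: rev X).
Proof.
rewrite zterm1 -ltwE fb /=.
apply/idP/idP => h; lra.
Qed.

Definition comb (w : word) : Prop := forall X Y, w = X ++ La :: Y ->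
  ltw (rev X) (Lb :: Y) /\ ltw Y (Lb :: rev X).

Lemma foldr_max_lt (l : seq rat) m : 0 < m ->
  (foldr Num.max 0 l < m) = all (fun x => x < m) l.
Proof.
move=> hm; elim: l => [|x l IH] /=; first by rewrite hm.
by rewrite gt_max IH.
Qed.

Lemma split_at (w : word) k : (k < size w)%N ->
  exists X z Y, w = X ++ z :: Y /\ size X = k.
Proof.
move=> hk; exists (take k w), (nth La w k), (drop k.+1 w); split.
  by rewrite -drop_nth // cat_take_drop.
by rewrite size_takel // ltnW.
Qed.

Lemma all_comb w :
  all (fun x => x < 3%:R) [seq zterm (chain_of w) i | i <- iota 0 (size (chain_of w))]
  <-> comb w.
Proof.
split.
- move=> /allP h X Y hw.
  have hs : (size (chain_of X) < size (chain_of w))%N.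
    by rewrite hw !size_chain size_cat /=; lia.
  have hs1 : ((size (chain_of X)).+1 < size (chain_of w))%N.
    by rewrite hw !size_chain size_cat /=; lia.
  have h0 := h _ (map_f (zterm (chain_of w)) (_ : size (chain_of X) \in _)).
  have h1 := h _ (map_f (zterm (chain_of w)) (_ : (size (chain_of X)).+1 \in _)).
  rewrite !mem_iota /= in h0 h1.
  move: (h0 hs) (h1 hs1); rewrite hw za0 za1 => -> ->; done.
- move=> hc; apply/allP => x /mapP [i]; rewrite mem_iota /= size_chain => hi ->.
  have hk : (i./2 < size w)%N.
    have := odd_double_half i; rewrite -muln2; lia.
  have [X [z [Y [hw hX]]]] := split_at _ _ hk.
  have hXc : size (chain_of X) = (2 * i./2)%N by rewrite size_chain hX.
  have hi' : i = size (chain_of X) \/ i = (size (chain_of X)).+1.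
    rewrite hXc; have := odd_double_half i; rewrite -muln2.
    case: (odd i) => /=; lia.
  rewrite hw; case: z hw => hw.
  + have [hA hB] := hc X Y hw.
    by case: hi' => ->; [rewrite za0 | rewrite za1].
  + by case: hi' => ->; [apply: zb0 | apply: zb1].
Qed.

Lemma good_comb w : w <> [::] ->
  (3%:R^-1 < Zc (chain_of w)) <-> comb w.
Proof.
case: w => [//|z Y] _.
have hpos : 0 < zmax (chain_of (z :: Y)).
  have h0 : 0 < zterm (chain_of ([::] ++ z :: Y)) (size (chain_of [::])).
    rewrite zterm0; have := f_ge0 Y; have := f_ge0 (rev [::]).
    have hk : 1 <= (kof z)%:R :> rat by rewrite ler1n kof_gt0.
    move=> a b.
    have : 0 < ((kof z)%:R + f Y)^-1 by rewrite invr_gt0; lra.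
    lra.
  rewrite /zmax size_chain.
  have -> : (2 * size (z :: Y))%N = (2 * size Y).+2 by rewrite /= mulnS.
  rewrite /= -/(zterm (chain_of (z :: Y)) 0).
  apply: (lt_le_trans h0); rewrite le_max; apply/orP; left; done.
rewrite /Zc ltf_pV2 ?posrE // ?ltr0n // foldr_max_lt ?ltr0n //.
exact: all_comb.
Qed.

Lemma ltw_catl p s t : ltw (p ++ s) (p ++ t) = ltw s t.
Proof. by elim: p => [|x p IH] //=; case: x. Qed.

Lemma U_cat s t : U (s ++ t) = U s ++ U t.
Proof. by rewrite /U map_cat flatten_cat. Qed.
Lemma V_cat s t : V (s ++ t) = V s ++ V t.
Proof. by rewrite /V map_cat flatten_cat. Qed.
Lemma U_cons x s : U (x :: s) = U [:: x] ++ U s.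
Proof. by rewrite -U_cat. Qed.
Lemma V_cons x s : V (x :: s) = V [:: x] ++ V s.
Proof. by rewrite -V_cat. Qed.


Lemma ltw_U s t : ltw (U s) (U t) = ltw s t.
Proof.
elim: s t => [|x s IH] [|y t] //.
- by case: y.
- by rewrite U_cons; case: x.
- rewrite U_cons [U (y :: t)]U_cons.
  case: x; case: y => //=; by rewrite IH.
Qed.

Lemma rev_U X : rev (U X) ++ [:: Lb] = Lb :: U (rev X).
Proof.
elim: X => [|x X IH] //.
rewrite U_cons rev_cat -catA.
have -> : rev (U [:: x]) ++ [:: Lb] = Lb :: U [:: x] by case: x.
rewrite -cat1s catA IH rev_cons -cats1 U_cat.
by [].
Qed.

Lemma rev_bU X : rev (Lb :: U X) = Lb :: U (rev X).
Proof. by rewrite rev_cons -cats1 rev_U. Qed.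

Lemma parseU w X' Y' : U w = X' ++ La :: Y' ->
  exists X Y, w = X ++ La :: Y /\ X' = U X /\ Y' = Lb :: U Y.
Proof.
elim: w X' => [|x w IH] X' /=.
- by case: X'.
- rewrite U_cons; case: x => /=.
  + case: X' => [|y X1] /=.
    * case=> <-; by exists [::], w.
    * case=> <-; case: X1 => [|y2 X2] /=; first by [].
      case=> <- /IH [X [Y [-> [-> ->]]]].
      by exists (La :: X), Y.
  + case: X' => [|y X1] /=; first by [].
    case=> <- /IH [X [Y [-> [-> ->]]]].
    by exists (Lb :: X), Y.
Qed.

Lemma combU w : comb w <-> comb (Ubar w).
Proof.
split.
- move=> hc X' Y'; rewrite /Ubar.
  case: X' => [|x X''] /=; first by [].
  case=> <- /parseU [X [Y [hw [-> ->]]]].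
  have [h1 h2] := hc X Y hw.
  rewrite rev_bU /=; split.
  + by rewrite -[Lb :: U Y]/(U (Lb :: Y)) ltw_U.
  + by rewrite -[Lb :: U (rev X)]/(U (Lb :: rev X)) ltw_U.
- move=> hc X Y hw.
  have := hc (Lb :: U X) (Lb :: U Y).
  rewrite /Ubar hw U_cat /= rev_bU /=.
  move=> /(_ erefl) [h1 h2]; split.
  + by rewrite -ltw_U.
  + by rewrite -ltw_U.
Qed.

Lemma ltw_V1 s t : ltw (V s) (Lb :: t).
Proof. by case: s => [|[] s]. Qed.

Lemma ltw_bV p t : ltw (Lb :: p) (V t) = false.
Proof. by case: t => [|[] t]. Qed.

Lemma ltw_V s t : ltw (V s) (V t) = ltw s t.
Proof.
elim: s t => [|x s IH] [|y t] //.
- by case: y.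
- by rewrite V_cons; case: x.
- rewrite V_cons [V (y :: t)]V_cons.
  case: x; case: y => /=; rewrite ?IH //.
  + exact: ltw_V1.
  + exact: ltw_bV.
Qed.

Lemma rev_V Z : La :: rev (V Z) = V (rev Z) ++ [:: La].
Proof.
elim: Z => [|x Z IH] //.
rewrite V_cons rev_cat -cat_cons IH -catA.
have -> : [:: La] ++ rev (V [:: x]) = V [:: x] ++ [:: La] by case: x.
by rewrite catA rev_cons -cats1 V_cat.
Qed.

Lemma keyV X0 : rev (Lb :: V X0) = behead (V (rev (Lb :: X0))).
Proof.
rewrite rev_cons -cats1 [rev (Lb :: X0)]rev_cons -cats1 V_cat.
have := rev_V X0.
by rewrite -[V [:: Lb]]/([:: La] ++ [:: Lb]) catA => <-.
Qed.

Lemma parseV w X' Y' : V w = X' ++ La :: Y' ->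
  exists X z Y, w = X ++ z :: Y /\ X' = V X /\
    Y' = (match z with La => V Y | Lb => Lb :: V Y end).
Proof.
elim: w X' => [|x w IH] X' /=.
- by case: X'.
- rewrite V_cons; case: x => /=.
  + case: X' => [|y X1] /=.
    * case=> <-; by exists [::], La, w.
    * case=> <- /IH [X [z [Y [-> [-> ->]]]]].
      by exists (La :: X), z, Y.
  + case: X' => [|y X1] /=.
    * case=> <-; by exists [::], Lb, w.
    * case=> <-; case: X1 => [|y2 X2] /=; first by [].
      case=> <- /IH [X [z [Y [-> [-> ->]]]]].
      by exists (Lb :: X), z, Y.
Qed.

Lemma Vbar_b w0 : Vbar (Lb :: w0) = Lb :: V w0.
Proof. by []. Qed.

Lemma rev_bX_cons X0 : exists c Q, rev (Lb :: X0) = c :: Q.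
Proof.
case E: (rev (Lb :: X0)) => [|c Q]; last by exists c, Q.
by move: (congr1 size E); rewrite size_rev.
Qed.

Lemma combV w0 : comb (Lb :: w0) <-> comb (Vbar (Lb :: w0)).
Proof.
rewrite Vbar_b; split.
- move=> hc X' Y'.
  case: X' => [|x X''] /=; first by [].
  case=> <- /parseV [X0 [z [Y0 [hw [-> ->]]]]].
  rewrite keyV.
  have [c [Q E]] := rev_bX_cons X0.
  rewrite E; case: z hw => hw.
  + have hw' : Lb :: w0 = (Lb :: X0) ++ La :: Y0 by rewrite hw.
    have [h1 _] := hc _ _ hw'.
    rewrite E in h1.
    case: c E h1 => E h1 /=; split; rewrite ?ltw_V1 ?ltw_V //.
  + case: c E => E /=; split; rewrite ?ltw_V1 ?ltw_V //=.
    have E' : Lb :: X0 = rev Q ++ [:: La].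
      by rewrite -[Lb :: X0]revK E rev_cons cats1.
    have hw' : Lb :: w0 = rev Q ++ La :: Lb :: Y0.
      by rewrite hw -cat_cons E' -catA.
    have [_ h2] := hc _ _ hw'.
    by move: h2; rewrite revK.
- move=> hc X Y.
  case: X => [|x X0] /=; first by case.
  case=> <- hw.
  have := hc (Lb :: V X0) (V Y).
  rewrite hw V_cat /= => /(_ erefl) [h1 _].
  have [c [Q E]] := rev_bX_cons X0.
  split.
  + move: h1; rewrite keyV E; by case: c E => E //=; rewrite ltw_V.
  + clear h1; case: Y hw => [|[] Y1] hw //=.
    have := hc (Lb :: V (X0 ++ [:: La])) (Lb :: V Y1).
    rewrite hw !V_cat /= -catA /= => /(_ erefl) [_ h2].
    move: h2; rewrite -V_cat keyV.
    have -> : rev (Lb :: X0 ++ [:: La]) = La :: rev (Lb :: X0).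
      by rewrite -cat_cons rev_cat.
    by rewrite /= ltw_V.
Qed.

Lemma starts_b T : typeI T \/ typeII T -> exists w0, T = Lb :: w0.
Proof.
case=> [[e1 [es [he1 [_ ->]]]] | [es [hne [_ ->]]]].
- case: e1 he1 => [//|e1] _ /=; by eexists.
- case: es hne => [//|e es] _ /=; by eexists.
Qed.

Theorem proposition4p2 (T : word) :
  typeI T \/ typeII T ->
  ((3%:R)^-1 < Zc (chain_of T) <-> (3%:R)^-1 < Zc (chain_of (Ubar T))) /\
  ((3%:R)^-1 < Zc (chain_of T) <-> (3%:R)^-1 < Zc (chain_of (Vbar T))).
Proof.
move=> /starts_b [w0 ->].
have h1 := @good_comb (Lb :: w0) ltac:(by []).
have h2 := @good_comb (Ubar (Lb :: w0)) ltac:(by []).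
have h3 := @good_comb (Vbar (Lb :: w0)) ltac:(by rewrite Vbar_b).
have h4 := combU (Lb :: w0).
have h5 := combV w0.
tauto.
Qed.
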